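(* Let $\mathcal{R}$ be a left-linear TRS, $\mathcal{R}_1,\mathcal{R}_2,\mathcal{C}\subseteq\mathcal{R}$, and $\mathcal{P}=\mathsf{PCPS}(\mathcal{R},\mathcal{C})$. Suppose every parallel critical pair $(t,u)$ between $\mathcal{R}$ and $\mathcal{R}$ satisfies $t\to_\mathcal{R}^*\cdot{}_\mathcal{R}\!\!\leftarrow^* u$. If $t\;{}_{\mathcal{R}_1}\!\Leftarrow s\Rightarrow_{\mathcal{R}_2}u$, then (i) $t\Rightarrow_{\mathcal{R}_2}\cdot\leftrightarrow^*_\mathcal{C}\cdot{}_{\mathcal{R}_1}\!\Leftarrow u$, or (ii) there exist $t',u'$ with $t\;{}_{\mathcal{R}_1}\!\Leftarrow t'\;{}_\mathcal{P}\!\!\leftarrow s\to_\mathcal{P} u'\Rightarrow_{\mathcal{R}_2}u$ and $t'\to_\mathcal{R}^*\cdot{}_\mathcal{R}\!\!\leftarrow^*u'$.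
   Context: A TRS is a set of rules $\ell\to r$ ($\ell\notin\mathcal{V}$, $\mathcal{V}ar(r)\subseteq\mathcal{V}ar(\ell)$); left-linear: no variable repeated in a left-hand side. Parallel step: $s\Rightarrow_\mathcal{R}t$ iff for some set $P$ of pairwise parallel positions of $s$ (no one a prefix of another), for each $p\in P$ there are $\ell\to r\in\mathcal{R}$, $\mu$ with $s|_p=\ell\mu$, $t|_p=r\mu$, and $t=s[t|_p]_{p\in P}$; $\Leftarrow$ is its inverse. $\leftrightarrow^*_\mathcal{C}$ is the conversion relation of $\mathcal{C}$. Parallel critical peak between $\mathcal{R}$ and $\mathcal{S}$: for a variant $\ell\to r$ of an $\mathcal{S}$-rule, a non-empty set $P$ of pairwise parallel function-symbol positions of $\ell$, variants $\ell_p\to r_p$ ($p\in P$) of $\mathcal{R}$-rules, all pairwise variable-disjoint, $\sigma$ a most general unifier of $\{\ell_p\approx\ell|_p\}_{p\in P}$, and $\ell_\epsilon\to r_\epsilon$ not a variant of $\ell\to r$ if $P=\{\epsilon\}$ (root): the peak $t\;{}_\mathcal{R}\!\Leftarrow s\xrightarrow{\epsilon}_\mathcal{S}u$ with $s=\ell\sigma$, $t=(\ell\sigma)[r_p\sigma]_{p\in P}$, $u=r\sigma$; $(t,u)$ is a parallel critical pair. $\mathsf{PCPS}(\mathcal{R},\mathcal{C})$ is the TRS $\{s\to t,\ s\to u\mid t\;{}_\mathcal{R}\!\Leftarrow s\xrightarrow{\epsilon}_\mathcal{R}u$ is a parallel critical peak between $\mathcal{R}$ and $\mathcal{R}$ and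 $t\leftrightarrow^*_\mathcal{C}u$ does not hold$\}$. *)

(* Defs.v *)
From Stdlib Require Import List Relations.
Import ListNotations.
Set Implicit Arguments.

(* Terms over function symbols F (arbitrary, arity implicit in the argument
   list) and a countably infinite set of variables (nat). *)
Inductive term (F : Type) : Type :=
| Var : nat -> term F
| Fun : F -> list (term F) -> term F.
Arguments Var {F} _.

Section TRS.
Variable F : Type.

Definition rule := (term F * term F)%type.
Definition trs := rule -> Prop.

Fixpoint vars (t : term F) : list nat :=
  match t with
  | Var x => [x]
  | Fun _ ts => flat_map vars ts
  end.

Fixpoint subst (sigma : nat -> term F) (t : term F) : term F :=
  match t with
  | Var x => sigma x
  | Fun f ts => Fun f (map (subst sigma) ts)
  end.

(* positions: sequences of (0-based) argument indices *)
Definition pos := list nat.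

Fixpoint subterm (t : term F) (p : pos) : option (term F) :=
  match p with
  | [] => Some t
  | i :: p' =>
      match t with
      | Var _ => None
      | Fun _ ts =>
          match nth_error ts i with
          | Some u => subterm u p'
          | None => None
          end
      end
  end.

(* t[u]_p (no change if p is not a position of t) *)
Fixpoint replace (t : term F) (p : pos) (u : term F) : term F :=
  match p with
  | [] => u
  | i :: p' =>
      match t with
      | Var _ => t
      | Fun f ts =>
          match nth_error ts i with
          | Some s => Fun f (firstn i ts ++ replace s p' u :: skipn (S i) ts)
          | None => t
          end
      end
  end.

Definition replace_all (s : term F) (P : list pos) (g : pos -> term F) : term F :=
  fold_right (fun p acc => replace acc p (g p)) s P.

Definition prefix (p q : pos) : Prop := exists r, q = p ++ r.

Definition parallel_set (P : list pos) : Prop :=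
  NoDup P /\ forall p q, In p P -> In q P -> p <> q -> ~ prefix p q.

Definition is_trs (R : trs) : Prop :=
  forall l r, R (l, r) -> (exists f ts, l = Fun f ts) /\ incl (vars r) (vars l).

Definition left_linear (R : trs) : Prop :=
  forall l r, R (l, r) -> NoDup (vars l).

Definition subtrs (R1 R : trs) : Prop := forall rl, R1 rl -> R rl.

Definition step (R : trs) (s t : term F) : Prop :=
  exists p l r sigma, R (l, r) /\ subterm s p = Some (subst sigma l) /\
                      t = replace s p (subst sigma r).

Definition root_step (R : trs) (s t : term F) : Prop :=
  exists l r sigma, R (l, r) /\ s = subst sigma l /\ t = subst sigma r.

Definition par_step (R : trs) (s t : term F) : Prop :=
  exists P : list pos, parallel_set P /\
    (forall p, In p P -> exists l r mu, R (l, r) /\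
        subterm s p = Some (subst mu l) /\ subterm t p = Some (subst mu r)) /\
    t = replace_all s P (fun p => match subterm t p with
                                  | Some u => u | None => Var 0 end).

Definition steps (R : trs) := clos_refl_trans (term F) (step R).
Definition conv (R : trs) := clos_refl_sym_trans (term F) (step R).
Definition joinable (R : trs) (t u : term F) : Prop :=
  exists v, steps R t v /\ steps R u v.

Definition renaming (pi : nat -> nat) : Prop :=
  exists pinv, (forall x, pinv (pi x) = x) /\ (forall x, pi (pinv x) = x).

Definition variant (rl rl' : rule) : Prop :=
  exists pi, renaming pi /\
    fst rl = subst (fun x => Var (pi x)) (fst rl') /\
    snd rl = subst (fun x => Var (pi x)) (snd rl').

Definition rule_vars (rl : rule) : list nat := vars (fst rl) ++ vars (snd rl).

Definition var_disjoint (rl rl' : rule) : Prop :=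
  forall x, In x (rule_vars rl) -> ~ In x (rule_vars rl').

Definition is_fun_pos (t : term F) (p : pos) : Prop :=
  exists f ts, subterm t p = Some (Fun f ts).

Definition unifier (sigma : nat -> term F) (E : list (term F * term F)) : Prop :=
  forall a b, In (a, b) E -> subst sigma a = subst sigma b.

Definition mgu (sigma : nat -> term F) (E : list (term F * term F)) : Prop :=
  unifier sigma E /\
  forall theta, unifier theta E ->
    exists delta, forall x, theta x = subst delta (sigma x).

(* parallel critical peak  t <=_R s ->^eps_S u  between R and S *)
Definition pc_peak (R S : trs) (s t u : term F) : Prop :=
  exists (l r : term F) (P : list pos) (rp : pos -> rule) (sigma : nat -> term F),
    (exists rl0, S rl0 /\ variant (l, r) rl0) /\
    P <> [] /\ parallel_set P /\
    (forall p, In p P -> is_fun_pos l p) /\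
    (forall p, In p P -> exists rl0, R rl0 /\ variant (rp p) rl0) /\
    (forall p, In p P -> var_disjoint (rp p) (l, r)) /\
    (forall p q, In p P -> In q P -> p <> q -> var_disjoint (rp p) (rp q)) /\
    mgu sigma (map (fun p => (fst (rp p), match subterm l p with
                                          | Some v => v | None => Var 0 end)) P) /\
    (P = [[]] -> ~ variant (rp []) (l, r)) /\
    s = subst sigma l /\
    t = replace_all (subst sigma l) P (fun p => subst sigma (snd (rp p))) /\
    u = subst sigma r.

Definition PCPS (R C : trs) : trs :=
  fun rl => exists s t u, pc_peak R R s t u /\ ~ conv C t u /\
                          (rl = (s, t) \/ rl = (s, u)).

End TRS.

(* Main.v *)
Require Import Defs.
From Stdlib Require Import List Relations Lia Arith Classical.
Import ListNotations.

Fixpoint term_ind' {F : Type} (P : term F -> Prop)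
  (HV : forall x, P (Var x)) (HF : forall f ts, Forall P ts -> P (Fun f ts))
  (t : term F) : P t :=
  match t with
  | Var x => HV x
  | Fun f ts => HF f ts ((fix go (l : list (term F)) : Forall P l :=
       match l with [] => Forall_nil _ | u :: us => Forall_cons _ (term_ind' P HV HF u) (go us) end) ts)
  end.

Lemma subst_comp {F} (a b : nat -> term F) t :
  subst a (subst b t) = subst (fun x => subst a (b x)) t.
Proof.
  induction t using term_ind'; simpl; auto.
  f_equal. rewrite map_map. induction H; simpl; auto. f_equal; auto.
Qed.

Lemma subst_ext_vars {F} (a b : nat -> term F) t :
  (forall x, In x (vars t) -> a x = b x) -> subst a t = subst b t.
Proof.
  induction t using term_ind'; simpl; intros Hx; auto.
  f_equal. induction H; simpl in *; auto.
  f_equal. apply H. intros; apply Hx; apply in_or_app; auto.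
  apply IHForall. intros; apply Hx; apply in_or_app; auto.
Qed.

Lemma subst_eq_vars {F} (a b : nat -> term F) t :
  subst a t = subst b t -> forall x, In x (vars t) -> a x = b x.
Proof.
  induction t using term_ind'; simpl; intros E y Hy.
  - destruct Hy as [<-|[]]; auto.
  - injection E as E. induction H; simpl in *. destruct Hy.
    injection E as E1 E2. apply in_app_or in Hy as [Hy|Hy]; auto.
Qed.

Lemma subst_Var {F} (t : term F) : subst (fun x => Var x) t = t.
Proof.
  induction t using term_ind'; simpl; auto. f_equal.
  induction H; simpl; auto. f_equal; auto.
Qed.

Lemma vars_ren {F} (pi : nat -> nat) (t : term F) :
  vars (subst (fun x => Var (pi x)) t) = map pi (vars t).
Proof.
  induction t using term_ind'; simpl; auto.
  induction H; simpl; auto. rewrite map_app. f_equal; auto.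
Qed.
Fixpoint mapi {A B : Type} (k : nat) (h : nat -> A -> B) (l : list A) : list B :=
  match l with [] => [] | x :: l' => h k x :: mapi (S k) h l' end.

Lemma length_mapi {A B} k (h : nat -> A -> B) l : length (mapi k h l) = length l.
Proof. revert k; induction l; simpl; auto. Qed.

Lemma nth_error_mapi {A B} k (h : nat -> A -> B) l i :
  nth_error (mapi k h l) i = option_map (h (k + i)) (nth_error l i).
Proof.
  revert k i; induction l; intros k i; destruct i; simpl; auto.
  rewrite Nat.add_0_r; auto. rewrite IHl. f_equal. f_equal. lia.
Qed.

Lemma mapi_ext_lt {A B} k (h1 h2 : nat -> A -> B) l :
  (forall j x, k <= j < k + length l -> h1 j x = h2 j x) -> mapi k h1 l = mapi k h2 l.
Proof.
  revert k; induction l; intros k H; simpl; auto. simpl in H.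
  f_equal. apply H; lia. apply IHl. intros; apply H; lia.
Qed.

Lemma mapi_id {A} k (h : nat -> A -> A) l :
  (forall j x, k <= j -> h j x = x) -> mapi k h l = l.
Proof.
  revert k; induction l; intros k H; simpl; auto. f_equal. apply H; lia. apply IHl; intros; apply H; lia.
Qed.

Lemma mapi_mapi {A B C} k (h1 : nat -> B -> C) (h2 : nat -> A -> B) l :
  mapi k h1 (mapi k h2 l) = mapi k (fun j x => h1 j (h2 j x)) l.
Proof. revert k; induction l; intros; simpl; f_equal; auto. Qed.

Lemma mapi_upd {A} k i (g : A -> A) l s : nth_error l i = Some s ->
  mapi k (fun j x => if j =? k + i then g x else x) l = firstn i l ++ g s :: skipn (S i) l.
Proof.
  revert k i; induction l; intros k i H; destruct i; simpl in *; try discriminate.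
  - injection H as <-. rewrite Nat.add_0_r, Nat.eqb_refl. f_equal. apply mapi_id. intros.
    destruct (Nat.eqb_spec j k); auto; lia.
  - destruct (Nat.eqb_spec k (k + S i)); [lia|]. f_equal.
    rewrite <- (IHl (S k) i H). apply mapi_ext_lt. intros. replace (S k + i) with (k + S i) by lia; auto.
Qed.

Lemma replace_Fun {F} (f : F) ts i p u s : nth_error ts i = Some s ->
  replace (Fun f ts) (i :: p) u =
  Fun f (mapi 0 (fun j x => if j =? i then replace x p u else x) ts).
Proof.
  intros H. simpl. rewrite H. f_equal. symmetry.
  exact (mapi_upd 0 i (fun x => replace x p u) ts s H).
Qed.

Definition strip (i : nat) (P : list pos) : list pos :=
  flat_map (fun q => match q with j :: p => if j =? i then [p] else [] | [] => [] end) P.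

Lemma strip_cons i j p P : strip i ((j :: p) :: P) = if j =? i then p :: strip i P else strip i P.
Proof. unfold strip; simpl. destruct (j =? i); auto. Qed.

Lemma in_strip i p P : In p (strip i P) <-> In (i :: p) P.
Proof.
  unfold strip. rewrite in_flat_map. split.
  - intros [q [Hq Hp]]. destruct q as [|j q]; [destruct Hp|].
    destruct (Nat.eqb_spec j i); [|destruct Hp]. destruct Hp as [<-|[]]; subst; auto.
  - intros H. exists (i :: p). split; auto. rewrite Nat.eqb_refl; simpl; auto.
Qed.

Lemma replace_all_Fun {F} (f : F) ss P g :
  (forall q, In q P -> q <> []) ->
  replace_all (Fun f ss) P g =
  Fun f (mapi 0 (fun i s => replace_all s (strip i P) (fun p => g (i :: p))) ss).
Proof.
  induction P as [|q P IH]; intros Hne.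
  - simpl. f_equal. symmetry. apply mapi_id. auto.
  - destruct q as [|i p]. { exfalso; apply (Hne []); simpl; auto. }
    change (replace_all (Fun f ss) ((i :: p) :: P) g) with (replace (replace_all (Fun f ss) P g) (i :: p) (g (i :: p))). rewrite IH by (intros; apply Hne; simpl; auto).
    destruct (nth_error ss i) as [s|] eqn:E.
    + erewrite replace_Fun.
      2:{ rewrite nth_error_mapi, E. simpl. reflexivity. }
      f_equal. rewrite mapi_mapi. apply mapi_ext_lt. intros j x _.
      rewrite strip_cons. destruct (Nat.eqb_spec j i); subst.
      * rewrite Nat.eqb_refl. reflexivity.
      * destruct (Nat.eqb_spec i j); [lia|]. reflexivity.
    + simpl. rewrite nth_error_mapi, E. simpl. f_equal. apply mapi_ext_lt.
      intros j x Hj. apply nth_error_None in E.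
      destruct (Nat.eqb_spec i j); [lia|]. reflexivity.
Qed.

Lemma replace_all_ext {F} (s : term F) P g h :
  (forall p, In p P -> g p = h p) -> replace_all s P g = replace_all s P h.
Proof.
  induction P; intros H; simpl; auto. rewrite IHP by (intros; apply H; simpl; auto).
  rewrite H by (simpl; auto). auto.
Qed.

Inductive ps {F} (R : trs F) : term F -> term F -> Prop :=
| ps_refl t : ps R t t
| ps_root l r mu : R (l, r) -> ps R (subst mu l) (subst mu r)
| ps_fun f ss ts : Forall2 (ps R) ss ts -> ps R (Fun f ss) (Fun f ts).

Fixpoint ps_ind' {F} (R : trs F) (Q : term F -> term F -> Prop)
  (H1 : forall t, Q t t)
  (H2 : forall l r mu, R (l, r) -> Q (subst mu l) (subst mu r))
  (H3 : forall f ss ts, Forall2 (fun s t => ps R s t /\ Q s t) ss ts -> Q (Fun f ss) (Fun f ts))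
  s t (H : ps R s t) {struct H} : Q s t :=
  match H with
  | ps_refl _ t => H1 t
  | ps_root _ l r mu Hr => H2 l r mu Hr
  | ps_fun _ f ss ts HF => H3 f ss ts
      ((fix go ss ts (HF : Forall2 (ps R) ss ts) : Forall2 (fun s t => ps R s t /\ Q s t) ss ts :=
          match HF with
          | Forall2_nil _ => Forall2_nil _
          | Forall2_cons _ _ Hh Ht => Forall2_cons _ _ (conj Hh (ps_ind' R Q H1 H2 H3 _ _ Hh)) (go _ _ Ht)
          end) ss ts HF)
  end.

Lemma Forall2_nth {A B} (Rel : A -> B -> Prop) a b i x :
  Forall2 Rel a b -> nth_error a i = Some x -> exists y, nth_error b i = Some y /\ Rel x y.
Proof.
  intros H; revert i; induction H; intros i Hi; destruct i; simpl in *; try discriminate.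
  injection Hi as <-; eauto. eauto.
Qed.

Lemma Forall2_nth' {A B} (Rel : A -> B -> Prop) a b i y :
  Forall2 Rel a b -> nth_error b i = Some y -> exists x, nth_error a i = Some x /\ Rel x y.
Proof.
  intros H; revert i; induction H; intros i Hi; destruct i; simpl in *; try discriminate.
  injection Hi as <-; eauto. eauto.
Qed.

Lemma Forall2_mapi {A B} (Q : A -> Prop) (Rel : A -> B -> Prop) k (h : nat -> A -> B) ss :
  Forall Q ss -> (forall i s, nth_error ss i = Some s -> Q s -> Rel s (h (k + i) s)) ->
  Forall2 Rel ss (mapi k h ss).
Proof.
  intros HQ; revert k; induction HQ; intros k Hh; simpl; constructor.
  - rewrite <- (Nat.add_0_r k). apply (Hh 0); auto.
  - apply IHHQ. intros i s Hs Hq. replace (S k + i) with (k + S i) by lia. apply Hh; auto.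
Qed.

Lemma Forall2_from_nth {A B} (Rel : A -> B -> Prop) a b :
  length a = length b ->
  (forall i x y, nth_error a i = Some x -> nth_error b i = Some y -> Rel x y) -> Forall2 Rel a b.
Proof.
  revert b; induction a; intros b Hl H; destruct b; simpl in *; try discriminate; constructor.
  apply (H 0); auto. apply IHa; auto. intros i; apply (H (S i)).
Qed.

Lemma NoDup_strip i P : NoDup P -> NoDup (strip i P).
Proof.
  induction 1. constructor.
  destruct x as [|j p]. change (strip i ([] :: l)) with (strip i l); auto. rewrite strip_cons.
  destruct (Nat.eqb_spec j i); subst; auto. constructor; auto. rewrite in_strip; auto.
Qed.

Lemma par_step_ps {F} (R : trs F) s t : par_step R s t -> ps R s t.
Proof.
  revert t; induction s as [x|f ss IH] using term_ind'; intros t [P [[HND Hpre] [Hred Ht]]].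
  - destruct P as [|q P]. { simpl in Ht; subst; constructor. }
    destruct (Hred q (or_introl eq_refl)) as [l [r [mu [HR [Hs Ht']]]]].
    destruct q; simpl in Hs. injection Hs as Hs. simpl in Ht'. injection Ht' as Ht'.
    rewrite Hs, Ht'. constructor; auto. discriminate.
  - destruct (in_dec (list_eq_dec Nat.eq_dec) [] P) as [H0|H0].
    { destruct (Hred [] H0) as [l [r [mu [HR [Hs Ht']]]]]. simpl in Hs, Ht'.
      injection Hs as Hs; injection Ht' as Ht'. rewrite Hs, Ht'; constructor; auto. }
    assert (Hne : forall q, In q P -> q <> []) by (intros q Hq E; subst; auto).
    set (g := fun p => match subterm t p with Some u => u | None => Var 0 end) in Ht.
    rewrite replace_all_Fun in Ht by auto.
    set (ts := mapi _ _ ss) in Ht.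
    assert (Hsub : forall i p ti, nth_error ts i = Some ti -> subterm t (i :: p) = subterm ti p).
    { intros i p ti Hi. rewrite Ht. simpl. rewrite Hi. auto. }
    rewrite Ht. constructor. subst ts. eapply Forall2_mapi; [exact IH|].
    intros i si Hsi IHi. simpl. apply IHi.
    exists (strip i P). split; [split|split].
    + apply NoDup_strip; auto.
    + intros p q Hp Hq Hpq [r' E]. subst q. apply in_strip in Hp, Hq.
      apply (Hpre _ _ Hp Hq). intros E; injection E; auto. exists r'; auto.
    + intros p Hp. apply in_strip in Hp. destruct (Hred _ Hp) as [l [r [mu [HR [Hs Ht']]]]].
      exists l, r, mu. split; auto. simpl in Hs. rewrite Hsi in Hs. split; auto.
      erewrite (Hsub i p) in Ht' by (rewrite nth_error_mapi, Hsi; reflexivity). exact Ht'.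
    + apply replace_all_ext. intros p _.
      change (g (i::p)) with (match subterm t (i::p) with Some u => u | None => Var 0 end).
      erewrite (Hsub i p) by (rewrite nth_error_mapi, Hsi; reflexivity). reflexivity.
Qed.

Definition catl (k : nat) (Ps : list (list pos)) : list pos :=
  concat (mapi k (fun i L => map (cons i) L) Ps).

Lemma in_catl k Ps q : In q (catl k Ps) <-> exists i p, q = (k + i) :: p /\ In p (nth i Ps []).
Proof.
  revert k; induction Ps as [|L Ps IH]; intros k; unfold catl in *; simpl.
  - split; [intros []|]. intros [i [p [_ H]]]. destruct i; destruct H.
  - rewrite in_app_iff, IH, in_map_iff. split.
    + intros [[p [<- Hp]]|[i [p [-> Hp]]]].
      * exists 0, p. rewrite Nat.add_0_r. auto.
      * exists (S i), p. split; auto. f_equal; lia.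
    + intros [i [p [-> Hp]]]. destruct i.
      * left. exists p. rewrite Nat.add_0_r. auto.
      * right. exists i, p. split; auto. f_equal; lia.
Qed.

Lemma strip_app i A B : strip i (A ++ B) = strip i A ++ strip i B.
Proof. unfold strip. apply flat_map_app. Qed.

Lemma strip_map_cons i k L : strip i (map (cons k) L) = if k =? i then L else [].
Proof.
  induction L; simpl. destruct (k =? i); auto.
  change (strip i ((k :: a) :: map (cons k) L) = if k =? i then a :: L else []).
  rewrite strip_cons, IHL. destruct (k =? i); auto.
Qed.

Lemma strip_catl k Ps j : strip j (catl k Ps) = if k <=? j then nth (j - k) Ps [] else [].
Proof.
  revert k; induction Ps as [|L Ps IH]; intros k; unfold catl in *; simpl.
  - destruct (k <=? j); auto. destruct (j - k); auto.
  - rewrite strip_app, strip_map_cons, IH.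
    destruct (Nat.eqb_spec k j); subst.
    + rewrite Nat.leb_refl, Nat.sub_diag. destruct (Nat.leb_spec (S j) j); [lia|]. simpl. apply app_nil_r.
    + destruct (Nat.leb_spec (S k) j), (Nat.leb_spec k j); try lia; simpl; auto.
      replace (j - k) with (S (j - S k)) by lia. reflexivity.
Qed.

Lemma NoDup_catl k Ps : (forall i, NoDup (nth i Ps [])) -> NoDup (catl k Ps).
Proof.
  revert k; induction Ps as [|L Ps IH]; intros k H; unfold catl in *; simpl. constructor.
  apply NoDup_app.
  - apply NoDup_map_NoDup_ForallPairs. intros x y _ _ E; injection E; auto. apply (H 0).
  - apply IH. intros i; apply (H (S i)).
  - intros q Hq1 Hq2. apply in_map_iff in Hq1 as [p [<- _]].
    change (In (k :: p) (catl (S k) Ps)) in Hq2. apply in_catl in Hq2 as [i [p' [E _]]].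
    injection E; lia.
Qed.

Lemma Forall2_collect {A B C} (Q : C -> A -> B -> Prop) (d : C) ss ts :
  Forall2 (fun s t => exists P, Q P s t) ss ts ->
  exists Ps, length Ps = length ss /\
    forall i s t, nth_error ss i = Some s -> nth_error ts i = Some t -> Q (nth i Ps d) s t.
Proof.
  induction 1. exists []; split; auto. intros i s t H; destruct i; discriminate.
  destruct H as [P HP]. destruct IHForall2 as [Ps [Hl HPs]].
  exists (P :: Ps). split. simpl; auto.
  intros i s t Hs Ht; destruct i; simpl in *; auto. injection Hs as <-; injection Ht as <-; auto.
Qed.

Lemma ps_par_step {F} (R : trs F) s t : ps R s t -> par_step R s t.
Proof.
  intros Hps; revert s t Hps; apply ps_ind'.
  - intros t. exists []. split. split. constructor. intros p q []. split. intros p []. reflexivity.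
  - intros l r mu HR. exists [[]]. split. split. repeat constructor. intros []. intros p q [<-|[]] [<-|[]] E; congruence.
    split. intros p [<-|[]]. exists l, r, mu. auto. reflexivity.
  - intros f ss ts H. assert (HF : Forall2 (fun s t => exists P, (fun P s t =>
      parallel_set P /\ (forall p, In p P -> exists l r mu, R (l, r) /\
        subterm s p = Some (subst mu l) /\ subterm t p = Some (subst mu r)) /\
      t = replace_all s P (fun p => match subterm t p with Some u => u | None => Var 0 end)) P s t) ss ts).
    { eapply Forall2_impl; [|exact H]. intros a b [_ Hab]. exact Hab. }
    apply (Forall2_collect _ []) in HF as [Ps [Hl HPs]].
    assert (Hlen : length ss = length ts) by (eapply Forall2_length; eauto).
    assert (Hin : forall q, In q (catl 0 Ps) -> exists i p s t, q = i :: p /\ In p (nth i Ps []) /\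
              nth_error ss i = Some s /\ nth_error ts i = Some t).
    { intros q Hq. apply in_catl in Hq as [i [p [-> Hp]]]. simpl.
      destruct (nth_error ss i) as [si|] eqn:Es.
      - destruct (Forall2_nth _ _ _ _ _ H Es) as [ti [Et _]]. exists i, p, si, ti; auto.
      - apply nth_error_None in Es. rewrite nth_overflow in Hp by lia. destruct Hp. }
    exists (catl 0 Ps). split; [split|split].
    + apply NoDup_catl. intros i. destruct (nth_error ss i) as [si|] eqn:Es.
      * destruct (Forall2_nth _ _ _ _ _ H Es) as [ti [Et _]]. apply (HPs _ _ _ Es Et).
      * apply nth_error_None in Es. rewrite nth_overflow by lia. constructor.
    + intros q1 q2 H1 H2 Hne [r' E]. subst q2.
      destruct (Hin _ H1) as [i [p [si [ti [-> [Hp [Es Et]]]]]]].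
      destruct (Hin _ H2) as [i' [p' [_ [_ [E [Hp' _]]]]]]. injection E as <- E.
      destruct (HPs _ _ _ Es Et) as [[_ Hpar] _]. subst p'.
      apply (Hpar p (p ++ r')); auto.
      * intros E'; apply Hne. simpl. f_equal. exact E'.
      * exists r'; auto.
    + intros q Hq. destruct (Hin _ Hq) as [i [p [si [ti [-> [Hp [Es Et]]]]]]].
      destruct (HPs _ _ _ Es Et) as [_ [Hr _]]. simpl. rewrite Es, Et. auto.
    + rewrite replace_all_Fun.
      2:{ intros q Hq E. destruct (Hin _ Hq) as [i [p [_ [_ [E' _]]]]]. congruence. }
      f_equal. apply nth_error_ext. intros i. rewrite nth_error_mapi. simpl.
      destruct (nth_error ss i) as [si|] eqn:Es.
      * destruct (Forall2_nth _ _ _ _ _ H Es) as [ti [Et _]]. rewrite Et. simpl.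
        destruct (HPs _ _ _ Es Et) as [_ [_ Ht]]. f_equal.
        rewrite strip_catl. simpl. rewrite Nat.sub_0_r.
        transitivity (replace_all si (nth i Ps []) (fun p => match subterm ti p with Some u => u | None => Var 0 end)); [exact Ht|].
        apply replace_all_ext. intros p _. reflexivity.
      * simpl. apply nth_error_None. apply nth_error_None in Es. lia.
Qed.

Lemma Forall2_map_same {A B} (Q : A -> Prop) (Rel : B -> B -> Prop) (f g : A -> B) l :
  Forall Q l -> (forall x, Q x -> Rel (f x) (g x)) -> Forall2 Rel (map f l) (map g l).
Proof. induction 1; intros H'; simpl; constructor; auto. Qed.

Lemma ps_subst_cong {F} (R : trs F) a b t :
  (forall x, ps R (a x) (b x)) -> ps R (subst a t) (subst b t).
Proof.
  intros H. induction t using term_ind'; simpl; auto.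
  constructor. eapply Forall2_map_same; eauto.
Qed.

Lemma subterm_subst {F} (d : nat -> term F) s p u :
  subterm s p = Some u -> subterm (subst d s) p = Some (subst d u).
Proof.
  revert s; induction p as [|i p IH]; intros s H; simpl in *. injection H as <-; auto.
  destruct s as [x|f ts]; try discriminate. simpl. rewrite nth_error_map.
  destruct (nth_error ts i); try discriminate. simpl. auto.
Qed.

Lemma replace_subst {F} (d : nat -> term F) s p u :
  subterm s p <> None -> subst d (replace s p u) = replace (subst d s) p (subst d u).
Proof.
  revert s; induction p as [|i p IH]; intros s H; simpl in *; auto.
  destruct s as [x|f ts]; [congruence|]. simpl. rewrite nth_error_map.
  destruct (nth_error ts i) as [si|] eqn:E; [|congruence]. simpl.
  rewrite map_app. simpl. rewrite IH by auto. rewrite firstn_map. destruct ts; simpl; auto. rewrite skipn_map. auto.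
Qed.

Lemma app_cons_facts {A} (pre post : list A) x :
  nth_error (pre ++ x :: post) (length pre) = Some x /\
  firstn (length pre) (pre ++ x :: post) = pre /\
  skipn (S (length pre)) (pre ++ x :: post) = post.
Proof. induction pre; simpl; auto. destruct IHpre as [? [? ?]]. rewrite H0. auto. Qed.

Lemma step_subst {F} (R : trs F) d s t : step R s t -> step R (subst d s) (subst d t).
Proof.
  intros [p [l [r [sg [HR [Hs Ht]]]]]]. exists p, l, r, (fun x => subst d (sg x)).
  split; auto. split.
  - rewrite <- subst_comp. apply subterm_subst; auto.
  - subst t. rewrite replace_subst by congruence. rewrite subst_comp. auto.
Qed.

Lemma step_ctx {F} (R : trs F) f pre post s t :
  step R s t -> step R (Fun f (pre ++ s :: post)) (Fun f (pre ++ t :: post)).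
Proof.
  intros [p [l [r [sg [HR [Hs Ht]]]]]]. exists (length pre :: p), l, r, sg.
  destruct (app_cons_facts pre post s) as [E1 [E2 E3]].
  split; auto. split. simpl. rewrite E1; auto. cbn [replace]. rewrite E1, E2, E3, Ht. auto.
Qed.

Lemma step_root {F} (R : trs F) l r sg : R (l, r) -> step R (subst sg l) (subst sg r).
Proof. intros H. exists [], l, r, sg. auto. Qed.

Lemma steps_subst {F} (R : trs F) d s t : steps R s t -> steps R (subst d s) (subst d t).
Proof. induction 1. apply rt_step, step_subst; auto. apply rt_refl. eapply rt_trans; eauto. Qed.

Lemma steps_ctx {F} (R : trs F) f pre post s t :
  steps R s t -> steps R (Fun f (pre ++ s :: post)) (Fun f (pre ++ t :: post)).
Proof. induction 1. apply rt_step, step_ctx; auto. apply rt_refl. eapply rt_trans; eauto. Qed.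

Lemma conv_subst {F} (R : trs F) d s t : conv R s t -> conv R (subst d s) (subst d t).
Proof.
  induction 1. apply rst_step, step_subst; auto. apply rst_refl. apply rst_sym; auto.
  eapply rst_trans; eauto.
Qed.

Lemma conv_ctx {F} (R : trs F) f pre post s t :
  conv R s t -> conv R (Fun f (pre ++ s :: post)) (Fun f (pre ++ t :: post)).
Proof.
  induction 1. apply rst_step, step_ctx; auto. apply rst_refl. apply rst_sym; auto.
  eapply rst_trans; eauto.
Qed.

Lemma conv_args {F} (R : trs F) f vs ws :
  Forall2 (conv R) vs ws -> conv R (Fun f vs) (Fun f ws).
Proof.
  intros H. cut (forall pre, conv R (Fun f (pre ++ vs)) (Fun f (pre ++ ws))).
  { intros H'. apply (H' []). }
  induction H; intros pre. apply rst_refl.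
  eapply rst_trans. apply (conv_ctx R f pre l x y); auto.
  specialize (IHForall2 (pre ++ [y])). rewrite <- !app_assoc in IHForall2. exact IHForall2.
Qed.

Lemma joinable_subst {F} (R : trs F) d s t : joinable R s t -> joinable R (subst d s) (subst d t).
Proof. intros [v [H1 H2]]. exists (subst d v). split; apply steps_subst; auto. Qed.

Lemma joinable_ctx {F} (R : trs F) f pre post s t :
  joinable R s t -> joinable R (Fun f (pre ++ s :: post)) (Fun f (pre ++ t :: post)).
Proof. intros [v [H1 H2]]. exists (Fun f (pre ++ v :: post)). split; apply steps_ctx; auto. Qed.

Lemma joinable_sym {F} (R : trs F) s t : joinable R s t -> joinable R t s.
Proof. intros [v [H1 H2]]. exists v; auto. Qed.

Fixpoint tsize {F} (t : term F) : nat :=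
  match t with Var _ => 1 | Fun _ ts => S (list_sum (map tsize ts)) end.

Lemma tsize_pos {F} (t : term F) : 1 <= tsize t.
Proof. destruct t; simpl; lia. Qed.

Lemma in_list_sum {F} (y : term F) l : In y l -> tsize y <= list_sum (map tsize l).
Proof. induction l; simpl; [tauto|]; intros [<-|H]; [lia|]. specialize (IHl H). lia. Qed.

Lemma vars_subst {F} (th : nat -> term F) t y :
  In y (vars (subst th t)) -> exists z, In z (vars t) /\ In y (vars (th z)).
Proof.
  induction t as [x|f ts IH] using term_ind'; simpl; intros H. exists x; auto.
  induction IH; simpl in *. destruct H.
  apply in_app_or in H as [H|H].
  - destruct (H0 H) as [z [? ?]]. exists z. split; auto. apply in_or_app; auto.
  - destruct (IHIH H) as [z [? ?]]. exists z. split; auto. apply in_or_app; auto.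
Qed.

Lemma tsize_subst_ge {F} (th : nat -> term F) t x :
  In x (vars t) -> tsize (th x) + (match t with Var _ => 0 | Fun _ _ => 1 end) <= tsize (subst th t).
Proof.
  induction t as [y|f ts IH] using term_ind'; simpl; intros H.
  - destruct H as [<-|[]]. lia.
  - induction IH; simpl in *. destruct H.
    apply in_app_or in H as [H|H].
    + specialize (H0 H). destruct x0; simpl in *; lia.
    + specialize (IHIH H). lia.
Qed.

Definition eqvars {F} (E : list (term F * term F)) : list nat :=
  flat_map (fun e => vars (fst e) ++ vars (snd e)) E.
Definition eqsize {F} (E : list (term F * term F)) : nat :=
  list_sum (map (fun e => tsize (fst e) + tsize (snd e)) E).
Definition nv {F} (E : list (term F * term F)) : nat := length (nodup Nat.eq_dec (eqvars E)).

Lemma nv_le {F} (E1 E2 : list (term F * term F)) :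
  incl (eqvars E2) (eqvars E1) -> nv E2 <= nv E1.
Proof.
  intros H. unfold nv. apply NoDup_incl_length. apply NoDup_nodup.
  intros y Hy. apply nodup_In in Hy. apply nodup_In. auto.
Qed.

Lemma nv_lt {F} (E1 E2 : list (term F * term F)) x :
  (forall y, In y (eqvars E2) -> In y (eqvars E1) /\ y <> x) -> In x (eqvars E1) -> nv E2 < nv E1.
Proof.
  intros H Hx. unfold nv. change (length (x :: nodup Nat.eq_dec (eqvars E2)) <= length (nodup Nat.eq_dec (eqvars E1))).
  apply NoDup_incl_length.
  - constructor. rewrite nodup_In. intros Hy. apply H in Hy. tauto. apply NoDup_nodup.
  - intros y [<-|Hy]; apply nodup_In; auto. apply nodup_In in Hy. apply H; auto.
Qed.

Lemma unifier_cons {F} (th : nat -> term F) a b E :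
  unifier th ((a, b) :: E) <-> subst th a = subst th b /\ unifier th E.
Proof.
  unfold unifier; simpl. split.
  - intros H. split; [apply H; auto|]. intros; apply H; auto.
  - intros [H1 H2] a' b' [E'|H]; auto. injection E' as <- <-; auto.
Qed.

Lemma unifier_combine {F} (th : nat -> term F) as_ bs E :
  length as_ = length bs ->
  (unifier th (combine as_ bs ++ E) <-> map (subst th) as_ = map (subst th) bs /\ unifier th E).
Proof.
  revert bs; induction as_ as [|a as_ IH]; intros [|b bs] Hl; simpl in *; try discriminate.
  - unfold unifier. simpl. tauto.
  - injection Hl as Hl. rewrite unifier_cons, IH by auto. split.
    + intros [H1 [H2 H3]]. rewrite H1, H2. auto.
    + intros [H1 H3]. injection H1 as H1 H2. auto.
Qed.

Lemma eqvars_combine {F} (as_ bs : list (term F)) y :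
  In y (eqvars (combine as_ bs)) -> In y (flat_map (@vars F) as_) \/ In y (flat_map (@vars F) bs).
Proof.
  revert bs; induction as_ as [|a as_ IH]; intros [|b bs]; simpl; try tauto.
  intros H. apply in_app_or in H as [H|H]. apply in_app_or in H as [H|H].
  left; apply in_or_app; auto. right; apply in_or_app; auto.
  destruct (IH bs H); [left|right]; apply in_or_app; auto.
Qed.

Lemma eqsize_combine {F} (as_ bs : list (term F)) :
  eqsize (combine as_ bs) <= list_sum (map tsize as_) + list_sum (map tsize bs).
Proof.
  unfold eqsize. revert bs; induction as_ as [|a as_ IH]; intros [|b bs]; simpl; try lia.
  specialize (IH bs). lia.
Qed.

Lemma eqvars_app {F} (E1 E2 : list (term F * term F)) : eqvars (E1 ++ E2) = eqvars E1 ++ eqvars E2.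
Proof. unfold eqvars. apply flat_map_app. Qed.

Lemma eqsize_app {F} (E1 E2 : list (term F * term F)) : eqsize (E1 ++ E2) = eqsize E1 + eqsize E2.
Proof. unfold eqsize. rewrite map_app. apply list_sum_app. Qed.

Definition substeqs {F} (rho : nat -> term F) (E : list (term F * term F)) :=
  map (fun e => (subst rho (fst e), subst rho (snd e))) E.

Lemma unifier_substeqs {F} (th rho : nat -> term F) E :
  unifier th (substeqs rho E) <-> unifier (fun y => subst th (rho y)) E.
Proof.
  unfold unifier, substeqs. split.
  - intros H a b Hab. rewrite <- !subst_comp. apply H. apply in_map_iff. exists (a, b); auto.
  - intros H a b Hab. apply in_map_iff in Hab as [[a' b'] [E' Hin]]. injection E' as <- <-.
    simpl. rewrite !subst_comp. auto.
Qed.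

Lemma var_elim {F} x (b : term F) E th :
  (forall m, m < nv ((Var x, b) :: E) -> forall E' : list (term F * term F), nv E' <= m -> (exists th, unifier th E') -> exists sg, mgu sg E') ->
  unifier th ((Var x, b) :: E) -> b <> Var x -> exists sg, mgu sg ((Var x, b) :: E).
Proof.
  intros IH Hth Hb. apply unifier_cons in Hth as [Hxb HE].
  assert (Hxn : ~ In x (vars b)).
  { intros Hx. destruct b as [y|f ts].
    - simpl in Hx. destruct Hx as [<-|[]]; auto.
    - pose proof (tsize_subst_ge th (Fun f ts) x Hx). change (subst th (Var x)) with (th x) in Hxb. rewrite <- Hxb in H. lia. }
  set (rho := fun y => if y =? x then b else Var y).
  assert (Hrb : subst rho b = b).
  { rewrite <- (subst_Var b) at 2. apply subst_ext_vars. intros y Hy. unfold rho.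
    destruct (Nat.eqb_spec y x); subst; auto. contradiction. }
  assert (Hth_rho : forall t, subst th (subst rho t) = subst th t).
  { intros t. rewrite subst_comp. apply subst_ext_vars. intros y _. unfold rho.
    destruct (Nat.eqb_spec y x); subst; simpl; auto. }
  destruct (IH (nv (substeqs rho E))) with (E' := substeqs rho E) as [sg' [Hu' Hmg']]; auto.
  { apply nv_lt with x.
    - intros y Hy. unfold eqvars, substeqs in Hy. rewrite flat_map_concat_map, map_map, <- flat_map_concat_map in Hy.
      apply in_flat_map in Hy as [[a' b'] [Hin Hy]]. simpl in Hy.
      assert (Hsub : forall t, In y (vars (subst rho t)) -> (In y (vars t) \/ In y (vars b)) /\ y <> x).
      { intros t Ht. apply vars_subst in Ht as [z [Hz Hy']]. unfold rho in Hy'.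
        destruct (Nat.eqb_spec z x); subst. split; auto. intros ->; auto.
        simpl in Hy'. destruct Hy' as [<-|[]]. auto. }
      split; [|apply in_app_or in Hy as [Hy|Hy]; apply Hsub in Hy; tauto].
      assert (HyE : In y (vars a') \/ In y (vars b') \/ In y (vars b)).
      { apply in_app_or in Hy as [Hy|Hy]; apply Hsub in Hy as [[Hy|Hy] _]; auto. }
      change (In y ((vars (@Var F x) ++ vars b) ++ eqvars E)). apply in_or_app.
      destruct HyE as [Hy'|[Hy'|Hy']].
      + right. unfold eqvars. apply in_flat_map. exists (a', b'). split; auto. apply in_or_app; auto.
      + right. unfold eqvars. apply in_flat_map. exists (a', b'). split; auto. apply in_or_app; auto.
      + left. apply in_or_app; auto.
    - simpl. auto. }
  { exists th. apply unifier_substeqs. intros a' b' H. rewrite <- !subst_comp, !Hth_rho. auto. }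
  exists (fun y => subst sg' (rho y)). split.
  - apply unifier_cons. split.
    + simpl. unfold rho at 1. rewrite Nat.eqb_refl. rewrite <- subst_comp, Hrb. auto.
    + apply unifier_substeqs. auto.
  - intros th' Hth'. apply unifier_cons in Hth' as [Hxb' HE'].
    destruct (Hmg' th') as [d Hd].
    { apply unifier_substeqs. intros a' b' H. rewrite <- !subst_comp.
      assert (forall t, subst th' (subst rho t) = subst th' t).
      { intros t. rewrite subst_comp. apply subst_ext_vars. intros y _. unfold rho.
        destruct (Nat.eqb_spec y x); subst; simpl; auto. }
      rewrite !H0. auto. }
    exists d. intros y. unfold rho. destruct (Nat.eqb_spec y x).
    + subst. simpl in Hxb'. rewrite Hxb', subst_comp. apply subst_ext_vars. intros z _. auto.
    + simpl. auto.
Qed.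

Lemma term_eq_var {F} (b : term F) x : {b = Var x} + {b <> Var x}.
Proof. destruct b as [y|f ts]. destruct (Nat.eq_dec y x); [left; subst; auto|right; congruence]. right; discriminate. Defined.

Lemma mgu_equiv {F} (E1 E2 : list (term F * term F)) sg :
  (forall th, unifier th E1 <-> unifier th E2) -> mgu sg E1 -> mgu sg E2.
Proof.
  intros H [H1 H2]. split. apply H; auto. intros th Hth. apply H2, H; auto.
Qed.

Lemma unif_mgu_aux {F} : forall n sz (E : list (term F * term F)),
  nv E <= n -> eqsize E <= sz -> (exists th, unifier th E) -> exists sg, mgu sg E.
Proof.
  intros n. induction n as [n IHn] using lt_wf_ind. intros sz.
  induction sz as [|sz IHsz]; intros E Hn Hs [th Hth]; (destruct E as [|[a b] E]).
  1,3: exists (fun x => Var x); split; [intros a b []|]; intros th' _; exists th'; auto.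
  - unfold eqsize in Hs. simpl in Hs. pose proof (tsize_pos a). lia.
  - assert (Hs' : tsize a + tsize b + eqsize E <= S sz) by (unfold eqsize in *; simpl in Hs; lia).
    assert (IHvar : forall m, m < nv ((a, b) :: E) -> forall E' : list (term F * term F),
                nv E' <= m -> (exists th, unifier th E') -> exists sg, mgu sg E').
    { intros m Hm E' HE' Hu. apply (IHn m) with (sz := eqsize E'); auto. lia. }
    destruct a as [x|f as_].
    + destruct (term_eq_var b x) as [->|Hb].
      * destruct (IHsz E) as [sg Hsg].
        { eapply Nat.le_trans; [|exact Hn]. apply nv_le. intros y Hy. change (In y ((vars (@Var F x) ++ vars (@Var F x)) ++ eqvars E)). apply in_or_app; auto. }
        { simpl in Hs'. lia. }
        { exists th. apply unifier_cons in Hth; tauto. }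
        exists sg. eapply mgu_equiv; [|exact Hsg]. intros th'. rewrite unifier_cons. tauto.
      * apply (var_elim x b E th); auto.
    + destruct b as [y|g bs].
      * destruct (var_elim y (Fun f as_) E th) as [sg Hsg].
        { intros m Hm. apply IHvar. eapply Nat.lt_le_trans; [exact Hm|]. apply nv_le.
          intros z Hz. unfold eqvars in *. simpl in Hz |- *. rewrite !in_app_iff in *. simpl. tauto. }
        { apply unifier_cons. apply unifier_cons in Hth. destruct Hth; auto. }
        { discriminate. }
        exists sg. eapply mgu_equiv; [|exact Hsg]. intros th'. rewrite !unifier_cons. intuition.
      * apply unifier_cons in Hth as [Hfg HE]. simpl in Hfg. injection Hfg as <- Hm.
        assert (Hl : length as_ = length bs) by (rewrite <- (length_map (subst th) as_), Hm, length_map; auto).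
        destruct (IHsz (combine as_ bs ++ E)) as [sg Hsg].
        { eapply Nat.le_trans; [|exact Hn]. apply nv_le. intros z Hz. rewrite eqvars_app in Hz.
          apply in_app_or in Hz as [Hz|Hz].
          - apply eqvars_combine in Hz. simpl. rewrite !in_app_iff. tauto.
          - simpl. rewrite !in_app_iff. tauto. }
        { rewrite eqsize_app. pose proof (eqsize_combine as_ bs). simpl in Hs'. lia. }
        { exists th. apply unifier_combine; auto. }
        exists sg. eapply mgu_equiv; [|exact Hsg]. intros th'. rewrite unifier_combine, unifier_cons by auto.
        simpl. split; intros [H1 H2]; (split; [|auto]). rewrite H1; auto. injection H1; auto.
Qed.

Lemma unif_mgu {F} (E : list (term F * term F)) th : unifier th E -> exists sg, mgu sg E.
Proof. intros H. apply (unif_mgu_aux (nv E) (eqsize E)); eauto. Qed.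

Definition rdata (F : Type) := ((term F * term F) * (nat -> term F))%type.
Definition Gf {F} (rho : pos -> rdata F) (p : pos) : term F :=
  subst (snd (rho p)) (snd (fst (rho p))).

Definition Dprop {F} (Rin : trs F) (l : term F) (mu : nat -> term F) (x : term F)
  (P : list pos) (rho : pos -> rdata F) (mu' : nat -> term F) : Prop :=
  parallel_set P /\
  (forall p, In p P -> is_fun_pos l p) /\
  (forall p, In p P -> Rin (fst (rho p)) /\ exists lp, subterm l p = Some lp /\
       subst mu lp = subst (snd (rho p)) (fst (fst (rho p)))) /\
  (forall y, ps Rin (mu y) (mu' y)) /\
  (forall p, In p P -> forall lp, subterm l p = Some lp -> forall y, In y (vars lp) -> mu' y = mu y) /\
  x = replace_all (subst mu' l) P (Gf rho) /\
  ps Rin (replace_all (subst mu l) P (Gf rho)) x.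

Lemma vars_subterm {F} (t : term F) p u : subterm t p = Some u -> incl (vars u) (vars t).
Proof.
  revert t; induction p as [|i p IH]; intros t H; simpl in H. injection H as <-; apply incl_refl.
  destruct t as [x|f ts]; try discriminate. destruct (nth_error ts i) as [ti|] eqn:E; try discriminate.
  intros y Hy. apply IH in H. apply H in Hy. simpl. apply in_flat_map. exists ti. split; auto.
  eapply nth_error_In; eauto.
Qed.

Lemma parallel_catl (Ps : list (list pos)) :
  (forall i, parallel_set (nth i Ps [])) -> parallel_set (catl 0 Ps).
Proof.
  intros H. split.
  - apply NoDup_catl. intros i; apply H.
  - intros q1 q2 H1 H2 Hne [r' E]. subst q2.
    apply in_catl in H1 as [i [p [-> Hp]]]. apply in_catl in H2 as [i' [p' [E Hp']]].
    injection E as <- E. destruct (H i) as [_ Hpar]. subst p'.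
    apply (Hpar p (p ++ r')); auto.
    + intros E'; apply Hne. simpl. f_equal. exact E'.
    + exists r'; auto.
Qed.

Fixpoint findi (z : nat) {F} (ls : list (term F)) : option nat :=
  match ls with
  | [] => None
  | l :: ls' => if in_dec Nat.eq_dec z (vars l) then Some 0 else option_map S (findi z ls')
  end.

Lemma findi_some {F} z (ls : list (term F)) i :
  findi z ls = Some i -> exists li, nth_error ls i = Some li /\ In z (vars li).
Proof.
  revert i; induction ls as [|l ls IH]; intros i H; simpl in H. discriminate.
  destruct (in_dec Nat.eq_dec z (vars l)). injection H as <-. exists l; auto.
  destruct (findi z ls) eqn:E; try discriminate. injection H as <-. simpl. auto.
Qed.

Lemma NoDup_app_disj {A} (l1 l2 : list A) z : NoDup (l1 ++ l2) -> In z l1 -> In z l2 -> False.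
Proof.
  induction l1; simpl; intros H H1 H2. auto. inversion H as [|a0 l0 Hn Hnd]; subst.
  destruct H1 as [->|H1]. apply Hn, in_or_app; auto. eauto.
Qed.

Lemma findi_uniq {F} z (ls : list (term F)) i li :
  NoDup (flat_map (@vars F) ls) -> nth_error ls i = Some li -> In z (vars li) -> findi z ls = Some i.
Proof.
  revert i; induction ls as [|l ls IH]; intros i Hnd Hi Hz; destruct i; simpl in *; try discriminate.
  - injection Hi as ->. destruct (in_dec Nat.eq_dec z (vars li)); tauto.
  - destruct (in_dec Nat.eq_dec z (vars l)).
    + exfalso. apply (NoDup_app_disj _ _ z Hnd i0).
      apply in_flat_map. exists li. split; auto. eapply nth_error_In; eauto.
    + rewrite (IH i); auto. eapply NoDup_app_remove_l; eauto.
Qed.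

Lemma Forall2_map_l {A B C} (Rel : B -> C -> Prop) (g : A -> B) l1 l2 :
  Forall2 Rel (map g l1) l2 -> Forall2 (fun a c => Rel (g a) c) l1 l2.
Proof.
  revert l2; induction l1; intros l2 H; inversion H; subst; constructor; auto.
Qed.

Lemma NoDup_flat_map_nth {F} (ls : list (term F)) i li :
  NoDup (flat_map (@vars F) ls) -> nth_error ls i = Some li -> NoDup (vars li).
Proof.
  revert i; induction ls; intros [|i] H Hi; simpl in *; try discriminate.
  injection Hi as ->. eapply NoDup_app_remove_r; eauto.
  eapply IHls; eauto. eapply NoDup_app_remove_l; eauto.
Qed.

Lemma Forall_NoDup_args {F} (ls : list (term F)) :
  NoDup (flat_map (@vars F) ls) -> Forall (fun l => NoDup (vars l)) ls.
Proof.
  induction ls; simpl; intros H; constructor.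
  eapply NoDup_app_remove_r; eauto. apply IHls. eapply NoDup_app_remove_l; eauto.
Qed.

Lemma Forall_Forall2_and {A B} (Q : A -> Prop) (Rel : A -> B -> Prop) l1 l2 :
  Forall Q l1 -> Forall2 Rel l1 l2 -> Forall2 (fun a b => Q a /\ Rel a b) l1 l2.
Proof. intros H1 H2; induction H2; inversion H1; subst; constructor; auto. Qed.

Lemma decomp {F} (Rin : trs F) mu l : NoDup (vars l) -> forall x, ps Rin (subst mu l) x ->
  exists P rho mu', Dprop Rin l mu x P rho mu'.
Proof.
  induction l as [y|f ls IH] using term_ind'; intros Hnd x H.
  - exists [], (fun _ => ((Var 0, Var 0), mu)), (fun z => if z =? y then x else mu z).
    unfold Dprop. split; [split; [constructor|intros p q []]|].
    split; [intros p []|]. split; [intros p []|].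
    split; [intros z; destruct (Nat.eqb_spec z y); subst; [exact H|constructor]|].
    split; [intros p []|]. simpl. rewrite Nat.eqb_refl. split; auto.
  - remember (subst mu (Fun f ls)) as s0 eqn:Es. destruct H as [t|l' r' nu HR|f0 ss xs HF].
    + exists [], (fun _ => ((Var 0, Var 0), mu)), mu.
      unfold Dprop. split; [split; [constructor|intros p q []]|].
      split; [intros p []|]. split; [intros p []|]. split; [intros; constructor|].
      split; [intros p []|]. simpl. subst. split; auto. constructor.
    + exists [[]], (fun _ => ((l', r'), nu)), mu.
      unfold Dprop. split; [split; [repeat constructor; simpl; tauto|intros p q [<-|[]] [<-|[]]; tauto]|].
      split; [intros p [<-|[]]; exists f, ls; reflexivity|].
      split; [intros p [<-|[]]; split; [exact HR|exists (Fun f ls); split; auto]|].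
      split; [intros; constructor|].
      split; [intros; auto|]. simpl. split; auto. constructor.
    + simpl in Es. injection Es as -> ->.
      apply Forall2_map_l in HF. simpl in Hnd. pose proof (Forall_NoDup_args ls Hnd) as Hnds.
      pose proof (Forall_Forall2_and _ _ _ _ IH (Forall_Forall2_and _ _ _ _ Hnds HF)) as HF2.
      set (d0 := (([] : list pos), (fun _ : pos => ((@Var F 0, @Var F 0), mu)), mu)).
      assert (HF3 : Forall2 (fun li xi => exists d : (list pos * (pos -> rdata F) * (nat -> term F)),
                       Dprop Rin li mu xi (fst (fst d)) (snd (fst d)) (snd d)) ls xs).
      { eapply Forall2_impl; [|exact HF2]. intros a b [IHa [Hna Hab]].
        destruct (IHa Hna b Hab) as [P [rho [mu' HD]]]. exists (P, rho, mu'). exact HD. }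
      apply (Forall2_collect _ d0) in HF3 as [Ds [HlD HDs]].
      assert (Hlx : length ls = length xs) by (eapply Forall2_length; eauto).
      set (P := catl 0 (map (fun d => fst (fst d)) Ds)).
      set (rho := fun q : pos => match q with [] => ((@Var F 0, @Var F 0), mu) | i :: p => snd (fst (nth i Ds d0)) p end).
      set (mu' := fun z => match findi z ls with Some i => snd (nth i Ds d0) z | None => mu z end).
      assert (Hstrip : forall i, strip i P = fst (fst (nth i Ds d0))).
      { intros i. unfold P. rewrite strip_catl. simpl. rewrite Nat.sub_0_r.
        change [] with ((fun d : (list pos * (pos -> rdata F) * (nat -> term F)) => fst (fst d)) d0) at 1.
        apply map_nth. }
      assert (Hcase : forall i, (exists li xi, nth_error ls i = Some li /\ nth_error xs i = Some xi)
                                \/ nth i Ds d0 = d0).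
      { intros i. destruct (nth_error ls i) as [li|] eqn:El.
        - destruct (Forall2_nth _ _ _ _ _ HF El) as [xi [Ex _]]. left; eauto.
        - right. apply nth_overflow. apply nth_error_None in El. lia. }
      assert (Hin : forall q, In q P -> exists i p li xi, q = i :: p /\ In p (fst (fst (nth i Ds d0))) /\
                       nth_error ls i = Some li /\ nth_error xs i = Some xi).
      { intros q Hq. unfold P in Hq. apply in_catl in Hq as [i [p [-> Hp]]].
        change [] with ((fun d : (list pos * (pos -> rdata F) * (nat -> term F)) => fst (fst d)) d0) in Hp.
        rewrite map_nth in Hp. destruct (Hcase i) as [[li [xi [El Ex]]]|Ed].
        - exists i, p, li, xi. auto.
        - rewrite Ed in Hp. destruct Hp. }
      assert (Hne : forall q, In q P -> q <> []).
      { intros q Hq. destruct (Hin q Hq) as [i [p [_ [_ [-> _]]]]]. discriminate. }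
      assert (Hmu' : forall i li, nth_error ls i = Some li -> forall z, In z (vars li) -> mu' z = snd (nth i Ds d0) z).
      { intros i li Hli z Hz. unfold mu'. rewrite (findi_uniq z ls i li); auto. }
      exists P, rho, mu'. unfold Dprop. split; [|split; [|split; [|split; [|split; [|split]]]]].
      * apply parallel_catl. intros i.
        change [] with ((fun d : (list pos * (pos -> rdata F) * (nat -> term F)) => fst (fst d)) d0).
        rewrite map_nth. destruct (Hcase i) as [[li [xi [El Ex]]]|Ed].
        -- apply (HDs _ _ _ El Ex).
        -- rewrite Ed. split; [constructor|intros p q []].
      * intros q Hq. destruct (Hin q Hq) as [i [p [li [xi [-> [Hp [El Ex]]]]]]].
        destruct (HDs _ _ _ El Ex) as [_ [HD2 _]]. destruct (HD2 p Hp) as [g [gs Hg]].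
        exists g, gs. simpl. rewrite El. auto.
      * intros q Hq. destruct (Hin q Hq) as [i [p [li [xi [-> [Hp [El Ex]]]]]]].
        destruct (HDs _ _ _ El Ex) as [_ [_ [HD3 _]]]. simpl. rewrite El. apply HD3; auto.
      * intros z. unfold mu'. destruct (findi z ls) as [i|] eqn:Ef; [|constructor].
        destruct (findi_some _ _ _ Ef) as [li [El _]].
        destruct (Forall2_nth _ _ _ _ _ HF El) as [xi [Ex _]].
        destruct (HDs _ _ _ El Ex) as [_ [_ [_ [HD4 _]]]]. apply HD4.
      * intros q Hq lp Hlp y Hy. destruct (Hin q Hq) as [i [p [li [xi [-> [Hp [El Ex]]]]]]].
        simpl in Hlp. rewrite El in Hlp.
        rewrite (Hmu' i li El) by (eapply vars_subterm; eauto).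
        destruct (HDs _ _ _ El Ex) as [_ [_ [_ [_ [HD5 _]]]]]. eapply HD5; eauto.
      * change (subst mu' (Fun f ls)) with (Fun f (map (subst mu') ls)).
        rewrite replace_all_Fun by auto. f_equal. apply nth_error_ext. intros i.
        rewrite nth_error_mapi, nth_error_map. simpl.
        destruct (nth_error ls i) as [li|] eqn:El.
        -- destruct (Forall2_nth _ _ _ _ _ HF El) as [xi [Ex _]]. rewrite Ex. simpl. f_equal.
           destruct (HDs _ _ _ El Ex) as [_ [_ [_ [_ [_ [HD6 _]]]]]]. rewrite HD6 at 1.
           rewrite Hstrip. rewrite (subst_ext_vars mu' (snd (nth i Ds d0)) li) by (apply Hmu'; auto).
           reflexivity.
        -- apply nth_error_None. apply nth_error_None in El. lia.
      * change (subst mu (Fun f ls)) with (Fun f (map (subst mu) ls)).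
        rewrite replace_all_Fun by auto. constructor. apply Forall2_from_nth.
        { rewrite length_mapi, length_map. auto. }
        intros i a b Ha Hb. rewrite nth_error_mapi, nth_error_map in Ha. simpl in Ha.
        destruct (nth_error ls i) as [li|] eqn:El; [|discriminate]. simpl in Ha. injection Ha as <-.
        destruct (HDs _ _ _ El Hb) as [_ [_ [_ [_ [_ [_ HD7]]]]]]. rewrite Hstrip. exact HD7.
Qed.

Definition ren (N M z : nat) : nat :=
  if z <? N then z + M else if andb (M <=? z) (z <? M + N) then z - M else z.

Lemma ren_invol N M z : N <= M -> ren N M (ren N M z) = z.
Proof.
  intros H. unfold ren.
  destruct (Nat.ltb_spec z N).
  - destruct (Nat.ltb_spec (z + M) N); [lia|].
    destruct (Nat.leb_spec M (z + M)), (Nat.ltb_spec (z + M) (M + N)); simpl; lia.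
  - destruct (Nat.leb_spec M z), (Nat.ltb_spec z (M + N)); simpl.
    + destruct (Nat.ltb_spec (z - M) N); lia.
    + destruct (Nat.ltb_spec z N); [lia|]. destruct (Nat.leb_spec M z); [|lia].
      destruct (Nat.ltb_spec z (M+N)); simpl; lia.
    + destruct (Nat.ltb_spec z N); [lia|]. destruct (Nat.leb_spec M z); [lia|]. simpl; lia.
    + destruct (Nat.ltb_spec z N); [lia|]. destruct (Nat.leb_spec M z); [lia|]. simpl; lia.
Qed.

Lemma ren_lt N M z : z < N -> ren N M z = z + M.
Proof. intros H. unfold ren. destruct (Nat.ltb_spec z N); lia. Qed.

Lemma renaming_ren N M : N <= M -> renaming (ren N M).
Proof. intros H. exists (ren N M). split; intros; apply ren_invol; auto. Qed.

Lemma subst_ren_invol {F} N M (t : term F) : N <= M ->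
  subst (fun z => Var (ren N M z)) (subst (fun z => Var (ren N M z)) t) = t.
Proof.
  intros H. rewrite subst_comp. rewrite <- (subst_Var t) at 2. apply subst_ext_vars.
  intros z _. simpl. rewrite ren_invol; auto.
Qed.

Fixpoint index_of (p : pos) (P : list pos) : nat :=
  match P with
  | [] => 0
  | q :: P' => if list_eq_dec Nat.eq_dec p q then 0 else S (index_of p P')
  end.

Lemma nth_index_of p P : In p P -> nth (index_of p P) P [] = p.
Proof.
  induction P as [|q P IH]; simpl; intros H. destruct H.
  destruct (list_eq_dec Nat.eq_dec p q); auto. destruct H; [congruence|auto].
Qed.

Lemma in_le_list_max z L : In z L -> z <= list_max L.
Proof.
  intros H. pose proof (proj1 (list_max_le L (list_max L)) (le_n _)) as HF.
  rewrite Forall_forall in HF. auto.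
Qed.

Lemma div_block y k N : y < N -> (y + S k * N) / N = S k /\ (y + S k * N) mod N = y.
Proof.
  intros H. assert (N <> 0) by lia. split.
  - rewrite Nat.div_add by auto. rewrite Nat.div_small by auto. lia.
  - rewrite Nat.Div0.mod_add. apply Nat.mod_small; auto.
Qed.

Lemma nth_error_upd_other {A} (ts : list A) j i y s : nth_error ts j = Some s -> i <> j ->
  nth_error (firstn j ts ++ y :: skipn (S j) ts) i = nth_error ts i.
Proof.
  intros Hj Hij. rewrite <- (mapi_upd 0 j (fun _ => y) ts s Hj). rewrite nth_error_mapi.
  simpl. destruct (nth_error ts i); simpl; auto. destruct (Nat.eqb_spec i j); congruence.
Qed.

Lemma nth_error_upd_same {A} (ts : list A) j y s : nth_error ts j = Some s ->
  nth_error (firstn j ts ++ y :: skipn (S j) ts) j = Some y.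
Proof.
  intros Hj. rewrite <- (mapi_upd 0 j (fun _ => y) ts s Hj). rewrite nth_error_mapi, Hj.
  simpl. rewrite Nat.eqb_refl. auto.
Qed.

Lemma subterm_replace_par {F} (s : term F) p q u :
  subterm s p <> None -> ~ prefix q p -> subterm (replace s q u) p <> None.
Proof.
  revert s p; induction q as [|j q IH]; intros s p Hs Hq.
  - exfalso. apply Hq. exists p. auto.
  - destruct s as [x|f ts]; simpl; auto.
    destruct (nth_error ts j) as [sj|] eqn:Ej; auto.
    destruct p as [|i p]; simpl. discriminate.
    simpl in Hs. destruct (Nat.eq_dec i j).
    + subst. rewrite (nth_error_upd_same _ _ _ _ Ej). rewrite Ej in Hs.
      apply IH; auto. intros [r' E]. apply Hq. exists r'. subst; auto.
    + rewrite (nth_error_upd_other _ _ _ _ _ Ej n). auto.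
Qed.

Lemma subterm_replace_all_par {F} (s : term F) P g p :
  subterm s p <> None -> (forall q, In q P -> ~ prefix q p) -> subterm (replace_all s P g) p <> None.
Proof.
  induction P; simpl; intros Hs Hq; auto. apply subterm_replace_par; auto.
Qed.

Lemma subst_replace_all {F} (d : nat -> term F) s P g :
  parallel_set P -> (forall p, In p P -> subterm s p <> None) ->
  subst d (replace_all s P g) = replace_all (subst d s) P (fun p => subst d (g p)).
Proof.
  induction P as [|p P IH]; intros [Hnd Hpar] Hs; simpl; auto.
  inversion Hnd as [|p0 P0 Hnin Hnd']; subst.
  rewrite replace_subst.
  - f_equal. apply IH. split; auto. intros; apply Hpar; simpl; auto. intros; apply Hs; simpl; auto.
  - apply subterm_replace_all_par. apply Hs; simpl; auto.
    intros q Hq. apply Hpar; simpl; auto. intros ->; auto.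
Qed.

Lemma overlap {F} (R Rin : trs F) l r mu x :
  R (l, r) -> NoDup (vars l) -> incl (vars r) (vars l) -> subtrs Rin R ->
  ps Rin (subst mu l) x ->
  (exists mu', (forall y, ps Rin (mu y) (mu' y)) /\ x = subst mu' l)
  \/ x = subst mu r
  \/ (exists sc tc uc (d d' mu' : nat -> term F), pc_peak R R sc tc uc /\
        subst mu l = subst d sc /\ subst mu r = subst d uc /\ ps Rin (subst d tc) x /\
        x = subst d' tc /\ subst mu' r = subst d' uc /\ (forall y, ps Rin (mu y) (mu' y))).
Proof.
  intros HR Hnd Hvr Hsub Hps.
  destruct (decomp Rin mu l Hnd x Hps) as [P [rho [mu' [HD1 [HD2 [HD3 [HD4 [HD5 [HD6 HD7]]]]]]]]].
  destruct P as [|p0 P0] eqn:EP.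
  { left. exists mu'. split; auto. }
  rewrite <- EP in *. right.
  set (lhs := fun p => fst (fst (rho p))). set (rhs := fun p => snd (fst (rho p))).
  set (nu := fun p => snd (rho p)).
  set (N := S (list_max (vars l ++ vars r ++ flat_map (fun p => vars (lhs p) ++ vars (rhs p)) P))).
  assert (HNl : forall z, In z (vars l) -> z < N).
  { intros z Hz. unfold N. apply Nat.lt_succ_r, in_le_list_max. apply in_or_app; auto. }
  assert (HNr : forall z, In z (vars r) -> z < N).
  { intros z Hz. unfold N. apply Nat.lt_succ_r, in_le_list_max. apply in_or_app; right; apply in_or_app; auto. }
  assert (HNp : forall p, In p P -> forall z, In z (vars (lhs p)) \/ In z (vars (rhs p)) -> z < N).
  { intros p Hp z Hz. unfold N. apply Nat.lt_succ_r, in_le_list_max. apply in_or_app; right; apply in_or_app; right.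
    apply in_flat_map. exists p. split; auto. apply in_or_app; auto. }
  set (K := fun p => S (index_of p P) * N).
  assert (HKN : forall p, N <= K p) by (intros p; unfold K; simpl; lia).
  set (rn := fun p z => @Var F (ren N (K p) z)).
  set (rp := fun p => (subst (rn p) (lhs p), subst (rn p) (rhs p))).
  set (mkth := fun (m : nat -> term F) z => if z <? N then m z else nu (nth (z / N - 1) P []) (z mod N)).
  assert (Hth_ren : forall m p, In p P -> forall y, y < N -> mkth m (ren N (K p) y) = nu p y).
  { intros m p Hp y Hy. unfold mkth. rewrite ren_lt by auto.
    destruct (Nat.ltb_spec (y + K p) N). { specialize (HKN p). lia. }
    unfold K. destruct (div_block y (index_of p P) N Hy) as [E1 E2]. rewrite E1, E2.
    simpl. rewrite Nat.sub_0_r, nth_index_of; auto. }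
  assert (Hth_l : forall m t, incl (vars t) (vars l) -> subst (mkth m) t = subst m t).
  { intros m t Ht. apply subst_ext_vars. intros z Hz. unfold mkth.
    destruct (Nat.ltb_spec z N); auto. exfalso. specialize (HNl z (Ht z Hz)). lia. }
  assert (Hth_rp : forall m p, In p P -> subst (mkth m) (fst (rp p)) = subst (nu p) (lhs p) /\
                                        subst (mkth m) (snd (rp p)) = subst (nu p) (rhs p)).
  { intros m p Hp. unfold rp, rn; simpl. rewrite !subst_comp. split; apply subst_ext_vars; intros z Hz; simpl;
    apply Hth_ren; auto; apply (HNp p Hp); auto. }
  set (Eqs := map (fun p => (fst (rp p), match subterm l p with Some v => v | None => Var 0 end)) P).
  assert (Hunif : forall m, (forall p, In p P -> forall lp, subterm l p = Some lp -> subst m lp = subst mu lp) ->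
                  unifier (mkth m) Eqs).
  { intros m Hm a b Hab. unfold Eqs in Hab. apply in_map_iff in Hab as [p [E Hp]]. injection E as <- <-.
    destruct (HD3 p Hp) as [_ [lp [Hlp Hlpe]]]. rewrite Hlp. change (subst (rn p) (lhs p)) with (fst (rp p)). rewrite (proj1 (Hth_rp m p Hp)).
    rewrite Hth_l by (eapply vars_subterm; eauto). rewrite (Hm p Hp lp Hlp). symmetry. exact Hlpe. }
  destruct (unif_mgu Eqs (mkth mu)) as [sg [Hsg Hmgu]].
  { apply Hunif. auto. }
  destruct (classic (P = [[]] /\ variant (rp []) (l, r))) as [[HP1 Hvar]|Hnv].
  {
    left. destruct Hvar as [pi [_ [Hv1 Hv2]]]. unfold rp in Hv1, Hv2. simpl in Hv1, Hv2.
    assert (HNK : N <= K []) by auto.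
    assert (Hl2 : lhs [] = subst (fun z => Var (ren N (K []) (pi z))) l).
    { rewrite <- (subst_ren_invol N (K []) (lhs [])) by auto. fold (rn []). rewrite Hv1.
      rewrite subst_comp. reflexivity. }
    assert (Hr2 : rhs [] = subst (fun z => Var (ren N (K []) (pi z))) r).
    { rewrite <- (subst_ren_invol N (K []) (rhs [])) by auto. fold (rn []). rewrite Hv2.
      rewrite subst_comp. reflexivity. }
    assert (Hin0 : In [] P) by (rewrite HP1; simpl; auto).
    destruct (HD3 [] Hin0) as [_ [lp [Hlp Hlpe]]]. simpl in Hlp. injection Hlp as <-.
    change (fst (fst (rho []))) with (lhs []) in Hlpe. change (snd (rho [])) with (nu []) in Hlpe. rewrite Hl2, subst_comp in Hlpe.
    rewrite HD6, HP1. simpl. unfold Gf. change (snd (fst (rho []))) with (rhs []). change (snd (rho [])) with (nu []). rewrite Hr2, subst_comp.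
    symmetry. apply subst_ext_vars. intros z Hz. apply Hvr in Hz.
    apply (subst_eq_vars _ _ _ Hlpe z Hz). }
  right.
  assert (Hpos : forall p, In p P -> subterm (subst sg l) p <> None).
  { intros p Hp. destruct (HD3 p Hp) as [_ [lp [Hlp _]]]. rewrite (subterm_subst sg l p lp Hlp). discriminate. }
  assert (Hinst : forall m d, (forall z, mkth m z = subst d (sg z)) ->
            forall t, subst d (subst sg t) = subst (mkth m) t).
  { intros m d Hd t. rewrite subst_comp. apply subst_ext_vars. intros; symmetry; auto. }
  assert (HtcI : forall m d, (forall z, mkth m z = subst d (sg z)) ->
            subst d (replace_all (subst sg l) P (fun p => subst sg (snd (rp p)))) =
            replace_all (subst m l) P (Gf rho)).
  { intros m d Hd. rewrite subst_replace_all by auto. rewrite (Hinst m d Hd l), Hth_l by apply incl_refl.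
    apply replace_all_ext. intros p Hp. rewrite (Hinst m d Hd). apply Hth_rp; auto. }
  destruct (Hmgu (mkth mu)) as [d Hd]. { apply Hunif; auto. }
  destruct (Hmgu (mkth mu')) as [d' Hd'].
  { apply Hunif. intros p Hp lp Hlp. apply subst_ext_vars. intros z Hz. eapply HD5; eauto. }
  exists (subst sg l), (replace_all (subst sg l) P (fun p => subst sg (snd (rp p)))), (subst sg r), d, d', mu'.
  split; [|split; [|split; [|split; [|split; [|split]]]]].
  - exists l, r, P, rp, sg. split.
    { exists (l, r). split; auto. exists (fun z => z). split.
      exists (fun z => z); auto. simpl. rewrite !subst_Var; auto. }
    split. rewrite EP; discriminate. split; auto. split; auto.
    split. { intros p Hp. exists (fst (rho p)). split. apply Hsub, HD3; auto.
      exists (ren N (K p)). split. apply renaming_ren; auto. split; reflexivity. }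
    split. { intros p Hp z Hz1 Hz2. unfold rule_vars in Hz1, Hz2. simpl in Hz1, Hz2. unfold rp, rn in Hz1.
      simpl in Hz1. rewrite !vars_ren, <- map_app in Hz1. apply in_map_iff in Hz1 as [y [<- Hy]].
      assert (y < N) by (apply (HNp p Hp); apply in_app_or in Hy; auto).
      rewrite ren_lt in Hz2 by auto. specialize (HKN p).
      apply in_app_or in Hz2 as [Hz2|Hz2]; [apply HNl in Hz2|apply HNr in Hz2]; lia. }
    split. { intros p q Hp Hq Hpq z Hz1 Hz2. unfold rule_vars, rp, rn in Hz1, Hz2. simpl in Hz1, Hz2.
      rewrite !vars_ren, <- map_app in Hz1, Hz2. apply in_map_iff in Hz1 as [y [<- Hy]].
      apply in_map_iff in Hz2 as [y' [E Hy']].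
      assert (y < N) by (apply (HNp p Hp); apply in_app_or in Hy; auto).
      assert (y' < N) by (apply (HNp q Hq); apply in_app_or in Hy'; auto).
      rewrite !ren_lt in E by auto. unfold K in E.
      assert (index_of p P <> index_of q P).
      { intros Ei. apply Hpq. rewrite <- (nth_index_of p P Hp), <- (nth_index_of q P Hq), Ei. auto. }
      destruct (Nat.lt_total (index_of p P) (index_of q P)) as [Hlt|[Heq|Hlt]]; [|contradiction|].
      - assert (S (S (index_of p P)) * N <= S (index_of q P) * N) by (apply Nat.mul_le_mono_r; lia).
        simpl in *. lia.
      - assert (S (S (index_of q P)) * N <= S (index_of p P) * N) by (apply Nat.mul_le_mono_r; lia).
        simpl in *. lia. }
    split. { split; auto. }
    split. { intros HP1. intros Hv. apply Hnv. auto. }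
    auto.
  - rewrite (Hinst mu d Hd), Hth_l by apply incl_refl. auto.
  - rewrite (Hinst mu d Hd), Hth_l by auto. auto.
  - rewrite (HtcI mu d Hd). auto.
  - rewrite (HtcI mu' d' Hd'). auto.
  - rewrite (Hinst mu' d' Hd'), Hth_l by auto. auto.
  - auto.
Qed.

Definition Concl {F} (R C R1 R2 : trs F) (s t u : term F) : Prop :=
  (exists v w, ps R2 t v /\ conv C v w /\ ps R1 u w)
  \/ (exists t' u', ps R1 t' t /\ step (PCPS R C) s t' /\
                   step (PCPS R C) s u' /\ ps R2 u' u /\ joinable R t' u').

Lemma root1 {F} (R R1 R2 C : trs F) :
  is_trs R -> left_linear R -> subtrs R1 R -> subtrs R2 R ->
  (forall s t u : term F, pc_peak R R s t u -> joinable R t u) ->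
  forall l r mu u, R1 (l, r) -> ps R2 (subst mu l) u -> Concl R C R1 R2 (subst mu l) (subst mu r) u.
Proof.
  intros Htrs Hll HR1 HR2 Hj l r mu u Hlr Hps.
  destruct (overlap R R2 l r mu u (HR1 _ Hlr) (Hll _ _ (HR1 _ Hlr)) (proj2 (Htrs _ _ (HR1 _ Hlr))) HR2 Hps)
    as [[mu' [Hm ->]]|[->|[sc [tc [uc [d [d' [mu' [Hpk [Hs [Hr [Hd [Hd' [Hr' Hm]]]]]]]]]]]]]].
  - left. exists (subst mu' r), (subst mu' r). split; [|split].
    apply ps_subst_cong; auto. apply rst_refl. apply ps_root; auto.
  - left. exists (subst mu r), (subst mu r). split; [|split]; try apply ps_refl. apply rst_refl.
  - destruct (classic (conv C tc uc)) as [Hc|Hc].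
    + left. exists (subst mu' r), u. split; [|split].
      apply ps_subst_cong; auto. rewrite Hr', Hd'. apply conv_subst, rst_sym; auto. apply ps_refl.
    + right. exists (subst mu r), (subst d tc). split; [apply ps_refl|]. split; [|split; [|split]].
      * rewrite Hs, Hr. apply step_root. exists sc, tc, uc. auto.
      * rewrite Hs. apply step_root. exists sc, tc, uc. auto.
      * auto.
      * rewrite Hr. apply joinable_sym, joinable_subst. eapply Hj; eauto.
Qed.

Lemma root2 {F} (R R1 R2 C : trs F) :
  is_trs R -> left_linear R -> subtrs R1 R -> subtrs R2 R ->
  (forall s t u : term F, pc_peak R R s t u -> joinable R t u) ->
  forall l r mu t, R2 (l, r) -> ps R1 (subst mu l) t -> Concl R C R1 R2 (subst mu l) t (subst mu r).
Proof.
  intros Htrs Hll HR1 HR2 Hj l r mu t Hlr Hps.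
  destruct (overlap R R1 l r mu t (HR2 _ Hlr) (Hll _ _ (HR2 _ Hlr)) (proj2 (Htrs _ _ (HR2 _ Hlr))) HR1 Hps)
    as [[mu' [Hm ->]]|[->|[sc [tc [uc [d [d' [mu' [Hpk [Hs [Hr [Hd [Hd' [Hr' Hm]]]]]]]]]]]]]].
  - left. exists (subst mu' r), (subst mu' r). split; [|split].
    apply ps_root; auto. apply rst_refl. apply ps_subst_cong; auto.
  - left. exists (subst mu r), (subst mu r). split; [|split]; try apply ps_refl. apply rst_refl.
  - destruct (classic (conv C tc uc)) as [Hc|Hc].
    + left. exists t, (subst mu' r). split; [|split].
      apply ps_refl. rewrite Hr', Hd'. apply conv_subst; auto. apply ps_subst_cong; auto.
    + right. exists (subst d tc), (subst mu r). split; [auto|]. split; [|split; [|split]].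
      * rewrite Hs. apply step_root. exists sc, tc, uc. auto.
      * rewrite Hs, Hr. apply step_root. exists sc, tc, uc. auto.
      * apply ps_refl.
      * rewrite Hr. apply joinable_subst. eapply Hj; eauto.
Qed.

Lemma args_lemma {F} (R C R1 R2 : trs F) ss : forall ts us,
  Forall (fun s => forall t u, ps R1 s t -> ps R2 s u -> Concl R C R1 R2 s t u) ss ->
  Forall2 (ps R1) ss ts -> Forall2 (ps R2) ss us ->
  (exists vs ws, Forall2 (ps R2) ts vs /\ Forall2 (conv C) vs ws /\ Forall2 (ps R1) us ws)
  \/ (exists pre post si ti ui, ss = pre ++ si :: post /\ Forall2 (ps R1) (pre ++ ti :: post) ts /\
        step (PCPS R C) si ti /\ step (PCPS R C) si ui /\ Forall2 (ps R2) (pre ++ ui :: post) us /\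
        joinable R ti ui).
Proof.
  induction ss as [|s ss IH]; intros ts us HI H1 H2.
  - inversion H1; inversion H2; subst. left. exists [], []. auto.
  - inversion H1 as [|a b ts0 ts' Hst Hts]; inversion H2 as [|a' b' us0 us' Hsu Hus]; subst.
    inversion HI as [|a0 l0 Hs HI']; subst.
    destruct (Hs _ _ Hst Hsu) as [[v [w [Hv [Hc Hw]]]]|[t' [u' [Ht' [Hst' [Hsu' [Hu' Hj]]]]]]].
    + destruct (IH ts' us' HI' Hts Hus) as [[vs [ws [Hvs [Hcs Hws]]]]|[pre [post [si [ti [ui [E [Ht [Hti [Hui [Hu Hj]]]]]]]]]]].
      * left. exists (v :: vs), (w :: ws). split; [constructor; auto|split; constructor; auto].
      * right. exists (s :: pre), post, si, ti, ui. subst. simpl.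
        split; [reflexivity|]. split; [constructor; auto|]. split; [auto|]. split; [auto|]. split; [constructor; auto|auto].
    + right. exists [], ss, s, t', u'. simpl.
        split; [reflexivity|]. split; [constructor; auto|]. split; [auto|]. split; [auto|]. split; [constructor; auto|auto].
Qed.

Lemma main_ps {F} (R R1 R2 C : trs F) :
  is_trs R -> left_linear R -> subtrs R1 R -> subtrs R2 R ->
  (forall s t u : term F, pc_peak R R s t u -> joinable R t u) ->
  forall s t u, ps R1 s t -> ps R2 s u -> Concl R C R1 R2 s t u.
Proof.
  intros Htrs Hll HR1 HR2 Hj s.
  induction s as [x|f ss IH] using term_ind'; intros t u H1 H2.
  - remember (Var x) as s0 eqn:Es. destruct H1 as [t|l r mu Hlr|f ss ts HF].
    + left. exists u, u. split; auto. split; [apply rst_refl|apply ps_refl].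
    + apply root1; auto.
    + discriminate.
  - remember (Fun f ss) as s0 eqn:Es. destruct H1 as [t|l r mu Hlr|f0 ss0 ts HF].
    + left. exists u, u. split; auto. split; [apply rst_refl|apply ps_refl].
    + apply root1; auto.
    + injection Es as -> ->.
      remember (Fun f ss) as s0 eqn:Es. destruct H2 as [u|l r mu Hlr|f0 ss0 us HG].
      * left. exists (Fun f ts), (Fun f ts). split; [apply ps_refl|]. split; [apply rst_refl|].
        subst. constructor; auto.
      * apply root2; auto. rewrite Es. constructor; auto.
      * injection Es as -> ->.
        destruct (args_lemma R C R1 R2 ss ts us IH HF HG)
          as [[vs [ws [Hvs [Hcs Hws]]]]|[pre [post [si [ti [ui [E [Ht [Hti [Hui [Hu Hj']]]]]]]]]]].
        -- left. exists (Fun f vs), (Fun f ws). split; [constructor; auto|]. split; [apply conv_args; auto|].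
           constructor; auto.
        -- right. exists (Fun f (pre ++ ti :: post)), (Fun f (pre ++ ui :: post)). subst ss.
           split; [constructor; auto|]. split; [apply step_ctx; auto|]. split; [apply step_ctx; auto|].
           split; [constructor; auto|]. apply joinable_ctx; auto.
Qed.

Theorem lemma10 (F : Type) (R R1 R2 C : trs F) :
  is_trs R -> left_linear R ->
  subtrs R1 R -> subtrs R2 R -> subtrs C R ->
  (forall s t u : term F, pc_peak R R s t u -> joinable R t u) ->
  forall s t u : term F,
    par_step R1 s t -> par_step R2 s u ->
    (exists v w, par_step R2 t v /\ conv C v w /\ par_step R1 u w)
    \/
    (exists t' u', par_step R1 t' t /\ step (PCPS R C) s t' /\
                   step (PCPS R C) s u' /\ par_step R2 u' u /\
                   joinable R t' u').
Proof.
  intros Htrs Hll HR1 HR2 HC Hj s t u H1 H2.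
  destruct (main_ps R R1 R2 C Htrs Hll HR1 HR2 Hj s t u (par_step_ps _ _ _ H1) (par_step_ps _ _ _ H2))
    as [[v [w [Hv [Hc Hw]]]]|[t' [u' [Ht [Hs1 [Hs2 [Hu Hjn]]]]]]].
  - left. exists v, w. split; [apply ps_par_step; auto|]. split; auto. apply ps_par_step; auto.
  - right. exists t', u'. split; [apply ps_par_step; auto|]. split; auto. split; auto.
    split; [apply ps_par_step; auto|]. auto.
Qed.
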